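(* For every smooth closed plane curve parametrized by arc length with rotation number $n\ge1$, $4\pi^2\widetilde I_{-1}\le I_0$.
   Context: A closed plane curve is a smooth map $\vec f:\mathbb{R}/L\mathbb{Z}\to\mathbb{R}^2$ parametrized by arc length $s$, where $L>0$ is its length. $\vec\nu$ is $\partial_s\vec f$ rotated counterclockwise by $\pi/2$, $\kappa=\partial_s^2\vec f\cdot\vec\nu$, $n=\frac1{2\pi}\int_0^L\kappa\,ds$, $\tilde\kappa=\kappa-\frac1L\int_0^L\kappa\,ds$, $I_0=L\int_0^L\tilde\kappa^2\,ds$. Identifying $\mathbb{R}^2$ with $\mathbb{C}$, $f=f_1+if_2$, $\hat f(k)=L^{-1/2}\int_0^L f(s)e^{-2\pi i k s/L}\,ds$, and $\widetilde I_{-1}=\frac{4\pi^2}{L^3}\sum_{k\in\mathbb Z\setminus\{0\}}(k-n)^2|\hat f(k)|^2$. *)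

(* Defs.v *)
From Stdlib Require Import Reals Lra ClassicalEpsilon.
Open Scope R_scope.

(* Integral of f over [a,b]: the Riemann integral when f is Riemann integrable
   (the value does not depend on the integrability proof), 0 otherwise.
   All integrands below are continuous, hence integrable. *)
Definition Rint (f : R -> R) (a b : R) : R :=
  match excluded_middle_informative (inhabited (Riemann_integrable f a b)) with
  | left H => RiemannInt (epsilon H (fun _ => True))
  | right _ => 0
  end.

(* A closed curve f = (f1,f2) : R/LZ -> R^2, given as L-periodic maps R -> R,
   which is smooth (C^infty): D1 k, D2 k are the k-th derivatives of f1, f2. *)
Definition smooth_derivs (D : nat -> R -> R) : Prop :=
  forall k x, derivable_pt_lim (D k) x (D (S k) x).

(* Curvature: kappa = f'' . nu, nu = f' rotated by +pi/2 = (-f2', f1'). *)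
Definition curvature (D1 D2 : nat -> R -> R) (s : R) : R :=
  D1 2%nat s * (- D2 1%nat s) + D2 2%nat s * D1 1%nat s.

Definition rot_number (D1 D2 : nat -> R -> R) (L : R) : R :=
  / (2 * PI) * Rint (curvature D1 D2) 0 L.

Definition I0 (D1 D2 : nat -> R -> R) (L : R) : R :=
  let m := / L * Rint (curvature D1 D2) 0 L in
  L * Rint (fun s => (curvature D1 D2 s - m) ^ 2) 0 L.

(* Real and imaginary parts of hat f(k) = L^{-1/2} int_0^L (f1 + i f2) e^{-2 pi i k s/L} ds. *)
Definition fhat_re (f1 f2 : R -> R) (L : R) (k : Z) : R :=
  / sqrt L * Rint (fun s => f1 s * cos (2 * PI * IZR k * s / L)
                           + f2 s * sin (2 * PI * IZR k * s / L)) 0 L.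
Definition fhat_im (f1 f2 : R -> R) (L : R) (k : Z) : R :=
  / sqrt L * Rint (fun s => f2 s * cos (2 * PI * IZR k * s / L)
                           - f1 s * sin (2 * PI * IZR k * s / L)) 0 L.

Definition fhat_norm2 (f1 f2 : R -> R) (L : R) (k : Z) : R :=
  fhat_re f1 f2 L k ^ 2 + fhat_im f1 f2 L k ^ 2.

(* Partial sums of tilde I_{-1} = (4 pi^2 / L^3) sum_{k in Z\{0}} (k-n)^2 |hat f(k)|^2,
   over 0 < |k| <= N. *)
Definition Itm1_partial (f1 f2 : R -> R) (L n : R) (N : nat) : R :=
  4 * PI ^ 2 / L ^ 3 *
  sum_f_R0 (fun j =>
     let k := Z.of_nat (S j) in
     (IZR k - n) ^ 2 * fhat_norm2 f1 f2 L k
     + (IZR (- k) - n) ^ 2 * fhat_norm2 f1 f2 L (- k)) N.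

(* Main.v *)
Require Import Defs.
From Stdlib Require Import Reals.
From Stdlib Require Import Lra Lia ZArith FunctionalExtensionality.
From Coquelicot Require Import Coquelicot.
Open Scope R_scope.


Lemma Rint_RInt f a b : ex_RInt f a b -> Rint f a b = RInt f a b.
Proof.
  intros H. unfold Rint.
  destruct (ClassicalEpsilon.excluded_middle_informative _) as [i|n].
  - symmetry; apply RInt_Reals.
  - exfalso; apply n; constructor; apply ex_RInt_Reals_0; exact H.
Qed.

Lemma c_plus (f g : R -> R) x : continuous f x -> continuous g x -> continuous (fun y => f y + g y) x.
Proof. intros; exact (continuous_plus f g x H H0). Qed.
Lemma c_mult (f g : R -> R) x : continuous f x -> continuous g x -> continuous (fun y => f y * g y) x.
Proof. intros; exact (continuous_mult f g x H H0). Qed.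
Lemma c_opp (f : R -> R) x : continuous f x -> continuous (fun y => - f y) x.
Proof. intros; exact (continuous_opp f x H). Qed.
Lemma c_minus (f g : R -> R) x : continuous f x -> continuous g x -> continuous (fun y => f y - g y) x.
Proof. intros; apply (c_plus f (fun y => - g y)); auto; apply c_opp; auto. Qed.
Lemma c_const (c x : R) : continuous (fun _ => c) x.
Proof. apply continuous_const. Qed.
Lemma c_id (x : R) : continuous (fun y => y) x.
Proof. apply continuous_id. Qed.
Lemma c_cos (f : R -> R) x : continuous f x -> continuous (fun y => cos (f y)) x.
Proof. intros; apply continuous_cos_comp; auto. Qed.
Lemma c_sin (f : R -> R) x : continuous f x -> continuous (fun y => sin (f y)) x.
Proof. intros. apply (continuous_comp f sin); auto. apply continuity_pt_filterlim. apply continuity_sin. Qed.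

Lemma c_divc (f : R -> R) c x : continuous f x -> continuous (fun y => f y / c) x.
Proof. intros. apply (c_mult f (fun _ => / c)); auto. apply c_const. Qed.

Lemma c_pow (f : R -> R) (m : nat) x : continuous f x -> continuous (fun y => f y ^ m) x.
Proof. intros H. induction m; simpl. apply c_const. apply (c_mult f (fun y => f y ^ m)); auto. Qed.

Ltac toR := match goal with |- @eq _ ?a ?b => change (@eq R a b) end.
Ltac Rring := toR; ring.
Ltac Rfield := toR; field.

Ltac cont := lazymatch goal with
 | |- continuous (fun _ => ?c) _ => apply c_const
 | |- continuous (fun y => y) _ => apply c_id
 | |- continuous (fun y => _ + _) _ => apply c_plus; cont
 | |- continuous (fun y => _ - _) _ => apply c_minus; cont
 | |- continuous (fun y => _ * _) _ => apply c_mult; cont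
 | |- continuous (fun y => _ / ?c) _ => apply c_divc; cont
 | |- continuous (fun y => - _) _ => apply c_opp; cont
 | |- continuous (fun y => _ ^ _) _ => apply c_pow; cont
 | |- continuous (fun y => cos _) _ => apply c_cos; cont
 | |- continuous (fun y => sin _) _ => apply c_sin; cont
 | |- continuous (Rmult ?a) _ => apply (c_mult (fun _ => a) (fun y => y)); cont
 | |- continuous (Rplus ?a) _ => apply (c_plus (fun _ => a) (fun y => y)); cont
 | |- continuous (Rminus ?a) _ => apply (c_minus (fun _ => a) (fun y => y)); cont
 | |- continuous (fun y => ?f y) ?x => cont_atom f x
 | |- continuous ?f ?x => cont_atom f x
 end
with cont_atom f x := first [ solve [auto] | match goal with H : forall x, continuous f x |- _ => apply H end
  | match goal with H : forall x, continuous f x /\ _ |- _ => apply H end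
  | match goal with H : forall x, _ /\ continuous f x |- _ => apply H end
  | solve [eauto with contdb] ].
Create HintDb contdb.

Lemma exR (f : R -> R) a b : (forall x, continuous f x) -> ex_RInt f a b.
Proof. intros; apply (ex_RInt_continuous (V := R_CompleteNormedModule)); auto. Qed.

Lemma RInt_lin (f g : R -> R) a b k : ex_RInt f a b -> ex_RInt g a b ->
  RInt (fun x => f x + k * g x) a b = RInt f a b + k * RInt g a b.
Proof.
  intros Hf Hg.
  transitivity (plus (RInt f a b) (RInt (fun x => scal k (g x)) a b)).
  - apply (RInt_plus (V:=R_CompleteNormedModule)); auto.
    apply (ex_RInt_scal (V:=R_CompleteNormedModule)); auto.
  - rewrite (RInt_scal (V:=R_CompleteNormedModule)); auto.
Qed.

Lemma RInt_extR (f g : R -> R) a b : (forall x, f x = g x) -> RInt f a b = RInt g a b.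
Proof. intros; apply RInt_ext; auto. Qed.

Lemma RInt_cst (a b c : R) : RInt (fun _ => c) a b = (b - a) * c.
Proof. rewrite (RInt_const (V:=R_CompleteNormedModule)). reflexivity. Qed.

Lemma ftc (F dF : R -> R) a b : (forall x, is_derive F x (dF x)) -> (forall x, continuous dF x) ->
  RInt dF a b = F b - F a.
Proof.
  intros H1 H2. apply (is_RInt_unique (V:=R_CompleteNormedModule)). apply (is_RInt_derive (V:=R_CompleteNormedModule) F dF); auto.
Qed.

Lemma sin_perZ x k : sin (x + 2 * IZR k * PI) = sin x.
Proof.
  destruct (Z_le_gt_dec 0 k) as [H|H].
  - replace k with (Z.of_nat (Z.to_nat k)) by lia. rewrite <- INR_IZR_INZ. apply sin_period.
  - replace k with (- Z.of_nat (Z.to_nat (-k)))%Z by lia. rewrite opp_IZR, <- INR_IZR_INZ.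
    set (n := Z.to_nat (-k)). rewrite <- (sin_period (x + 2 * - INR n * PI) n). f_equal; ring.
Qed.
Lemma cos_perZ x k : cos (x + 2 * IZR k * PI) = cos x.
Proof.
  destruct (Z_le_gt_dec 0 k) as [H|H].
  - replace k with (Z.of_nat (Z.to_nat k)) by lia. rewrite <- INR_IZR_INZ. apply cos_period.
  - replace k with (- Z.of_nat (Z.to_nat (-k)))%Z by lia. rewrite opp_IZR, <- INR_IZR_INZ.
    set (n := Z.to_nat (-k)). rewrite <- (cos_period (x + 2 * - INR n * PI) n). f_equal; ring.
Qed.

Lemma int_cos_per L al be d : al <> 0 -> al * L = 2 * IZR d * PI ->
  RInt (fun s => cos (al * s + be)) 0 L = 0.
Proof.
  intros Ha Hd.
  rewrite (ftc (fun s => sin (al * s + be) / al)).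
  - replace (al * L + be) with (be + 2 * IZR d * PI) by lra. rewrite sin_perZ.
    replace (al * 0 + be) with be by ring. exact (Rminus_diag_eq _ _ eq_refl).
  - intros x. auto_derive; auto. field; auto.
  - intros; cont.
Qed.

Definition E1 (om ph : nat -> R) (i : nat) (s : R) := cos (om i * s + ph i).
Definition E2 (om ph : nat -> R) (i : nat) (s : R) := sin (om i * s + ph i).
Definition ipf (L : R) (u1 u2 v1 v2 : R -> R) : R := RInt (fun s => u1 s * v1 s + u2 s * v2 s) 0 L.
Definition coef L h1 h2 om ph i := ipf L h1 h2 (E1 om ph i) (E2 om ph i) / L.
Fixpoint r1 L h1 h2 om ph (m : nat) (s : R) : R :=
  match m with O => h1 s | S m' => r1 L h1 h2 om ph m' s - coef L h1 h2 om ph m' * E1 om ph m' s end.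
Fixpoint r2 L h1 h2 om ph (m : nat) (s : R) : R :=
  match m with O => h2 s | S m' => r2 L h1 h2 om ph m' s - coef L h1 h2 om ph m' * E2 om ph m' s end.
Fixpoint ssum (g : nat -> R) (m : nat) : R :=
  match m with O => 0 | S m' => ssum g m' + g m' end.

Lemma RInt_lin3 (f g h : R -> R) a b k1 k2 : ex_RInt f a b -> ex_RInt g a b -> ex_RInt h a b ->
  RInt (fun x => f x + k1 * g x + k2 * h x) a b = RInt f a b + k1 * RInt g a b + k2 * RInt h a b.
Proof.
  intros. rewrite (RInt_lin (fun x => f x + k1 * g x)); auto.
  - rewrite RInt_lin; auto.
  - apply (ex_RInt_plus (V:=R_CompleteNormedModule)); auto.
    apply (ex_RInt_scal (V:=R_CompleteNormedModule) g a b k1); auto.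
Qed.

Lemma cE1 om ph i x : continuous (E1 om ph i) x.
Proof. unfold E1; cont. Qed.
Lemma cE2 om ph i x : continuous (E2 om ph i) x.
Proof. unfold E2; cont. Qed.
#[export] Hint Resolve cE1 cE2 : contdb.

Lemma ipf_lin L (u1 u2 w1 w2 v1 v2 : R -> R) k :
  (forall x, continuous u1 x) -> (forall x, continuous u2 x) ->
  (forall x, continuous w1 x) -> (forall x, continuous w2 x) ->
  (forall x, continuous v1 x) -> (forall x, continuous v2 x) ->
  ipf L (fun s => u1 s - k * w1 s) (fun s => u2 s - k * w2 s) v1 v2
  = ipf L u1 u2 v1 v2 - k * ipf L w1 w2 v1 v2.
Proof.
  intros. unfold ipf.
  rewrite (RInt_extR _ (fun x => (u1 x*v1 x+u2 x*v2 x) + (-k) * (w1 x*v1 x + w2 x * v2 x))).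
  - rewrite RInt_lin; [Rring| |]; apply exR; intros; cont.
  - intros; ring.
Qed.

Lemma ipf_EE L om ph i : ipf L (E1 om ph i) (E2 om ph i) (E1 om ph i) (E2 om ph i) = L.
Proof.
  unfold ipf. rewrite (RInt_extR _ (fun _ => 1)).
  - rewrite RInt_cst; ring.
  - intros; unfold E1, E2. rewrite <- (sin2_cos2 (om i * x + ph i)). unfold Rsqr; ring.
Qed.

Lemma cont_r L h1 h2 om ph : (forall x, continuous h1 x) -> (forall x, continuous h2 x) ->
  forall m x, continuous (r1 L h1 h2 om ph m) x /\ continuous (r2 L h1 h2 om ph m) x.
Proof.
  intros H1 H2 m; induction m; intros x; simpl; auto.
  destruct (IHm x); split.
  - apply (c_minus (r1 L h1 h2 om ph m)); auto. apply c_mult; [apply c_const| apply cE1].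
  - apply (c_minus (r2 L h1 h2 om ph m)); auto. apply c_mult; [apply c_const| apply cE2].
Qed.

Lemma r1S L h1 h2 om ph m : r1 L h1 h2 om ph (S m) =
  fun s => r1 L h1 h2 om ph m s - coef L h1 h2 om ph m * E1 om ph m s.
Proof. reflexivity. Qed.
Lemma r2S L h1 h2 om ph m : r2 L h1 h2 om ph (S m) =
  fun s => r2 L h1 h2 om ph m s - coef L h1 h2 om ph m * E2 om ph m s.
Proof. reflexivity. Qed.

Lemma ip_r_e L h1 h2 om ph M : 0 < L ->
  (forall x, continuous h1 x) -> (forall x, continuous h2 x) ->
  (forall i j, (i < M)%nat -> (j < M)%nat -> i <> j ->
     ipf L (E1 om ph i) (E2 om ph i) (E1 om ph j) (E2 om ph j) = 0) ->
  forall m, (m <= M)%nat -> forall j, (j < M)%nat ->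
  ipf L (r1 L h1 h2 om ph m) (r2 L h1 h2 om ph m) (E1 om ph j) (E2 om ph j)
  = if Nat.ltb j m then 0 else ipf L h1 h2 (E1 om ph j) (E2 om ph j).
Proof.
  intros hL H1 H2 Ho m; induction m; intros Hm j Hj.
  - reflexivity.
  - rewrite r1S, r2S. pose proof (cont_r L h1 h2 om ph H1 H2 m) as Hc.
    rewrite ipf_lin; try (intros; apply Hc); try apply cE1; try apply cE2.
    rewrite IHm by lia.
    destruct (Nat.eq_dec j m) as [->|Hne].
    + rewrite ipf_EE. rewrite (proj2 (Nat.ltb_ge m m)) by lia.
      rewrite (proj2 (Nat.ltb_lt m (S m))) by lia. unfold coef. field. lra.
    + rewrite Ho by lia.
      destruct (Nat.ltb_spec j m); destruct (Nat.ltb_spec j (S m)); try lia; ring.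
Qed.

Lemma alg1 A S P L : L <> 0 -> A - S / L + -2 * (P / L) * P + (P / L) ^ 2 * L = A - (S + P ^ 2) / L.
Proof. intros; field; auto. Qed.

Lemma ip_r_r L h1 h2 om ph M : 0 < L ->
  (forall x, continuous h1 x) -> (forall x, continuous h2 x) ->
  (forall i j, (i < M)%nat -> (j < M)%nat -> i <> j ->
     ipf L (E1 om ph i) (E2 om ph i) (E1 om ph j) (E2 om ph j) = 0) ->
  forall m, (m <= M)%nat ->
  ipf L (r1 L h1 h2 om ph m) (r2 L h1 h2 om ph m) (r1 L h1 h2 om ph m) (r2 L h1 h2 om ph m)
  = ipf L h1 h2 h1 h2 - ssum (fun i => (ipf L h1 h2 (E1 om ph i) (E2 om ph i))^2) m / L.
Proof.
  intros hL H1 H2 Ho m; induction m; intros Hm.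
  - cbn [ssum]. unfold Rdiv. rewrite Rmult_0_l, Rminus_0_r. reflexivity.
  - pose proof (cont_r L h1 h2 om ph H1 H2 m) as Hc.
    pose proof (ip_r_e L h1 h2 om ph M hL H1 H2 Ho m ltac:(lia) m ltac:(lia)) as He.
    rewrite (proj2 (Nat.ltb_ge m m)) in He by lia.
    rewrite r1S, r2S. cbn [ssum].
    set (a := coef L h1 h2 om ph m).
    set (P := ipf L h1 h2 (E1 om ph m) (E2 om ph m)).
    unfold ipf in *.
    rewrite (RInt_extR _ (fun x => (r1 L h1 h2 om ph m x * r1 L h1 h2 om ph m x + r2 L h1 h2 om ph m x * r2 L h1 h2 om ph m x)
       + (-2 * a) * (r1 L h1 h2 om ph m x * E1 om ph m x + r2 L h1 h2 om ph m x * E2 om ph m x)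
       + (a^2) * (E1 om ph m x * E1 om ph m x + E2 om ph m x * E2 om ph m x))).
    + rewrite RInt_lin3; try (apply exR; intros x; destruct (Hc x); pose proof (cE1 om ph m x); pose proof (cE2 om ph m x); cont).
      rewrite IHm by lia. rewrite He. fold (ipf L (E1 om ph m) (E2 om ph m) (E1 om ph m) (E2 om ph m)).
      rewrite ipf_EE. unfold a, coef. change (ipf L h1 h2 (E1 om ph m) (E2 om ph m)) with P. fold P. apply alg1; lra.
    + intros; ring.
Qed.

Lemma bessel L h1 h2 om ph M : 0 < L ->
  (forall x, continuous h1 x) -> (forall x, continuous h2 x) ->
  (forall i j, (i < M)%nat -> (j < M)%nat -> i <> j ->
     ipf L (E1 om ph i) (E2 om ph i) (E1 om ph j) (E2 om ph j) = 0) ->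
  ssum (fun i => (ipf L h1 h2 (E1 om ph i) (E2 om ph i))^2) M <= L * ipf L h1 h2 h1 h2.
Proof.
  intros hL H1 H2 Ho.
  pose proof (ip_r_r L h1 h2 om ph M hL H1 H2 Ho M (le_n _)) as Hr.
  assert (0 <= ipf L (r1 L h1 h2 om ph M) (r2 L h1 h2 om ph M) (r1 L h1 h2 om ph M) (r2 L h1 h2 om ph M)).
  { unfold ipf. apply RInt_ge_0; [lra| |].
    - pose proof (cont_r L h1 h2 om ph H1 H2 M) as Hc. apply exR; intros x; destruct (Hc x); cont.
    - intros; nra. }
  rewrite Hr in H.
  assert (0 <= ipf L h1 h2 h1 h2 * L - ssum (fun i => (ipf L h1 h2 (E1 om ph i) (E2 om ph i))^2) M).
  { replace (ipf L h1 h2 h1 h2 * L - ssum (fun i => (ipf L h1 h2 (E1 om ph i) (E2 om ph i))^2) M) with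
     ((ipf L h1 h2 h1 h2 - ssum (fun i => (ipf L h1 h2 (E1 om ph i) (E2 om ph i))^2) M / L) * L) by (field; lra).
    apply Rmult_le_pos; lra. }
  lra.
Qed.


Lemma isd (D : nat -> R -> R) k x : smooth_derivs D -> is_derive (D k) x (D (S k) x).
Proof. intros H. apply is_derive_Reals. apply H. Qed.

Lemma cD (D : nat -> R -> R) k x : smooth_derivs D -> continuous (D k) x.
Proof. intros H. apply (ex_derive_continuous (K:=R_AbsRing) (V:=R_NormedModule)). exists (D (S k) x). apply isd; auto. Qed.

Lemma per_all (D : nat -> R -> R) L : smooth_derivs D -> (forall s, D 0%nat (s + L) = D 0%nat s) ->
  forall k s, D k (s + L) = D k s.
Proof.
  intros hs hp k; induction k; intros s; auto.
  assert (Hf : (fun x => D k (x + L)) = D k) by (apply functional_extensionality; auto).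
  assert (H1 : is_derive (fun x => D k (x + L)) s (scal 1 (D (S k) (s + L)))).
  { apply (is_derive_comp (D k) (fun x => x + L) s (D (S k) (s + L)) 1).
    apply isd; auto. auto_derive; auto. }
  rewrite (scal_one (V:=R_NormedModule)) in H1.
  assert (H2 : is_derive (D k) s (D (S k) (s+L))) by (rewrite <- Hf; exact H1).
  clear H1; rename H2 into H1.
  apply is_derive_unique in H1. rewrite <- H1. apply is_derive_unique. apply isd; auto.
Qed.

Definition Pc L (u1 u2 : R -> R) w f := ipf L u1 u2 (fun s => cos (w * s + f)) (fun s => sin (w * s + f)).

Lemma IBP L (u1 u2 v1 v2 : R -> R) w f k :
  (forall x, is_derive u1 x (v1 x)) -> (forall x, is_derive u2 x (v2 x)) ->
  (forall x, continuous v1 x) -> (forall x, continuous v2 x) ->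
  u1 L = u1 0 -> u2 L = u2 0 -> w * L = 2 * IZR k * PI ->
  Pc L v1 v2 w f = - w * Pc L u1 u2 w (f + PI / 2).
Proof.
  intros d1 d2 cv1 cv2 p1 p2 hw.
  assert (cu1 : forall x, continuous u1 x) by (intros; apply (ex_derive_continuous (K:=R_AbsRing) (V:=R_NormedModule)); eexists; eauto).
  assert (cu2 : forall x, continuous u2 x) by (intros; apply (ex_derive_continuous (K:=R_AbsRing) (V:=R_NormedModule)); eexists; eauto).
  assert (H := ftc (fun s => u1 s * cos (w * s + f) + u2 s * sin (w * s + f))
     (fun s => (v1 s * cos (w * s + f) + v2 s * sin (w * s + f))
        + w * (u1 s * cos (w * s + (f + PI/2)) + u2 s * sin (w * s + (f + PI/2)))) 0 L).
  rewrite RInt_lin in H.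
  - match type of H with _ -> _ -> _ = ?r => assert (H0 : r = 0) end.
    { rewrite p1, p2. replace (w * L + f) with ((w * 0 + f) + 2 * IZR k * PI) by lra.
      rewrite sin_perZ, cos_perZ. Rring. }
    rewrite H0 in H. unfold Pc, ipf. toR.
    assert (Hd : forall x, is_derive (fun s : R => u1 s * cos (w * s + f) + u2 s * sin (w * s + f)) x
       (v1 x * cos (w * x + f) + v2 x * sin (w * x + f) +
        w * (u1 x * cos (w * x + (f + PI / 2)) + u2 x * sin (w * x + (f + PI / 2))))).
    { intros x. auto_derive.
      * split; [eexists; apply d1| split; [eexists; apply d2| auto]].
        replace (Derive (fun x0 : R => u1 x0) x) with (v1 x) by (symmetry; apply is_derive_unique; apply d1). replace (Derive (fun x0 : R => u2 x0) x) with (v2 x) by (symmetry; apply is_derive_unique; apply d2).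
        replace (w * x + (f + PI / 2)) with ((w * x + f) + PI / 2) by ring.
        rewrite (cos_plus (w*x+f) (PI/2)), (sin_plus (w*x+f) (PI/2)), cos_PI2, sin_PI2. ring. }
    specialize (H Hd ltac:(intros; cont)). lra.
  - apply exR; intros; cont.
  - apply exR; intros; cont.
Qed.

Lemma Pc_pi L u1 u2 w f : (forall x, continuous u1 x) -> (forall x, continuous u2 x) ->
  Pc L u1 u2 w (f + PI) = - Pc L u1 u2 w f.
Proof.
  intros c1 c2. unfold Pc, ipf.
  rewrite (RInt_extR _ (fun s => 0 + (-1) * (u1 s * cos (w * s + f) + u2 s * sin (w * s + f)))).
  - rewrite RInt_lin. rewrite RInt_cst. Rring. apply exR; intros; cont. apply exR; intros; cont.
  - intros x. replace (w * x + (f + PI)) with ((w * x + f) + PI) by ring. rewrite neg_cos, neg_sin. ring.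
Qed.

Lemma Pc_h L (D1 D2 : nat -> R -> R) c w f k :
  smooth_derivs D1 -> smooth_derivs D2 ->
  (forall s, D1 0%nat (s + L) = D1 0%nat s) -> (forall s, D2 0%nat (s + L) = D2 0%nat s) ->
  w * L = 2 * IZR k * PI ->
  Pc L (fun s => D1 2%nat s + c * D2 1%nat s) (fun s => D2 2%nat s - c * D1 1%nat s) w f
  = (c * w - w ^ 2) * Pc L (D1 0%nat) (D2 0%nat) w f.
Proof.
  intros hs1 hs2 hp1 hp2 hw.
  pose proof (per_all D1 L hs1 hp1) as q1. pose proof (per_all D2 L hs2 hp2) as q2.
  assert (e1 : forall j, D1 j L = D1 j 0) by (intros j; rewrite <- (Rplus_0_l L) at 1; apply q1).
  assert (e2 : forall j, D2 j L = D2 j 0) by (intros j; rewrite <- (Rplus_0_l L) at 1; apply q2).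
  assert (c1 : forall j x, continuous (D1 j) x) by (intros; apply cD; auto).
  assert (c2 : forall j x, continuous (D2 j) x) by (intros; apply cD; auto).
  assert (A : forall j g, Pc L (D1 (S j)) (D2 (S j)) w g = - w * Pc L (D1 j) (D2 j) w (g + PI / 2)).
  { intros j g. apply (IBP L (D1 j) (D2 j) (D1 (S j)) (D2 (S j)) w g k); auto; intros; apply isd; auto. }
  assert (B : Pc L (fun s => D1 2%nat s + c * D2 1%nat s) (fun s => D2 2%nat s - c * D1 1%nat s) w f
     = Pc L (D1 2%nat) (D2 2%nat) w f + c * Pc L (D1 1%nat) (D2 1%nat) w (f + PI / 2)).
  { unfold Pc, ipf.
    rewrite (RInt_extR _ (fun s => (D1 2%nat s * cos (w * s + f) + D2 2%nat s * sin (w * s + f))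
        + c * (D1 1%nat s * cos (w * s + (f + PI / 2)) + D2 1%nat s * sin (w * s + (f + PI / 2))))).
    - apply RInt_lin; apply exR; intros; cont.
    - intros x. replace (w * x + (f + PI / 2)) with ((w * x + f) + PI / 2) by ring.
      rewrite (cos_plus (w*x+f) (PI/2)), (sin_plus (w*x+f) (PI/2)), cos_PI2, sin_PI2. ring. }
  rewrite B, (A 1%nat), (A 0%nat).
  replace (f + PI / 2 + PI / 2) with (f + PI) by field.
  rewrite Pc_pi; auto. toR. ring.
Qed.


Definition kz (i : nat) : Z :=
  if Nat.ltb (i mod 4) 2 then Z.of_nat (S (i / 4)) else (- Z.of_nat (S (i / 4)))%Z.
Definition omf L (i : nat) := 2 * PI * IZR (kz i) / L.
Definition phf (i : nat) := if Nat.eqb (i mod 2) 0 then 0 else PI / 2.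

Lemma orth L : 0 < L -> forall i j, i <> j ->
  ipf L (E1 (omf L) phf i) (E2 (omf L) phf i) (E1 (omf L) phf j) (E2 (omf L) phf j) = 0.
Proof.
  intros hL i j hij. unfold ipf, E1, E2.
  rewrite (RInt_extR _ (fun s => cos ((omf L i - omf L j) * s + (phf i - phf j)))).
  2:{ intros; replace ((omf L i - omf L j) * x + (phf i - phf j)) with ((omf L i * x + phf i) - (omf L j * x + phf j)) by ring. rewrite cos_minus. reflexivity. }
  destruct (Z.eq_dec (kz i) (kz j)) as [E|E].
  - assert (Ho : omf L i = omf L j) by (unfold omf; rewrite E; auto).
    assert (Hp : phf i - phf j = PI / 2 \/ phf i - phf j = - (PI / 2)).
    { assert (i mod 2 <> j mod 2)%nat.
      { intros Hm. revert E. unfold kz.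
        pose proof (Nat.div_mod_eq i 4). pose proof (Nat.div_mod_eq j 4).
        pose proof (Nat.div_mod_eq i 2). pose proof (Nat.div_mod_eq j 2).
        pose proof (Nat.mod_upper_bound i 2 ltac:(lia)). pose proof (Nat.mod_upper_bound j 2 ltac:(lia)).
        pose proof (Nat.mod_upper_bound i 4 ltac:(lia)). pose proof (Nat.mod_upper_bound j 4 ltac:(lia)).
        destruct (Nat.ltb_spec (i mod 4) 2); destruct (Nat.ltb_spec (j mod 4) 2); intros E; lia. }
      pose proof (Nat.mod_upper_bound i 2 ltac:(lia)). pose proof (Nat.mod_upper_bound j 2 ltac:(lia)).
      unfold phf. destruct (Nat.eqb_spec (i mod 2) 0); destruct (Nat.eqb_spec (j mod 2) 0);
        try lia; first [left; ring | right; ring]. }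
    rewrite (RInt_extR _ (fun _ => 0)).
    + rewrite RInt_cst; Rring.
    + intros x. rewrite Ho. destruct Hp as [Hp|Hp]; rewrite Hp.
      * replace ((omf L j - omf L j) * x + PI / 2) with (PI / 2) by ring. apply cos_PI2.
      * replace ((omf L j - omf L j) * x + - (PI / 2)) with (- (PI / 2)) by ring.
        rewrite cos_neg. apply cos_PI2.
  - apply (int_cos_per L _ _ (kz i - kz j)).
    + intro H0. apply E. apply eq_IZR. pose proof PI_RGT_0.
      assert (H1 : IZR (kz i) - IZR (kz j) = (omf L i - omf L j) * L / (2 * PI))
        by (unfold omf; field; split; lra).
      rewrite H0 in H1. lra.
    + unfold omf. rewrite minus_IZR. pose proof PI_RGT_0. field. lra.
Qed.

Lemma regroup (g : nat -> R) N : ssum g (4 * S N) =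
  sum_f_R0 (fun j => g (4 * j)%nat + g (4 * j + 1)%nat + g (4 * j + 2)%nat + g (4 * j + 3)%nat) N.
Proof.
  induction N.
  - simpl. ring.
  - replace (4 * S (S N))%nat with (S (S (S (S (4 * S N))))) by lia.
    cbn [ssum]. rewrite IHN. rewrite tech5. cbv beta.
    replace (4 * S N + 1)%nat with (S (4 * S N)) by lia.
    replace (4 * S N + 2)%nat with (S (S (4 * S N))) by lia.
    replace (4 * S N + 3)%nat with (S (S (S (4 * S N)))) by lia. ring.
Qed.

Lemma dm4 j t : (t < 4)%nat -> ((4 * j + t) / 4 = j /\ (4 * j + t) mod 4 = t)%nat.
Proof.
  intros. pose proof (Nat.div_mod_eq (4*j+t) 4). pose proof (Nat.mod_upper_bound (4*j+t) 4 ltac:(lia)). lia.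
Qed.
Lemma dm2 j t : (t < 4)%nat -> ((4 * j + t) mod 2 = t mod 2)%nat.
Proof.
  intros. pose proof (Nat.div_mod_eq (4*j+t) 2). pose proof (Nat.mod_upper_bound (4*j+t) 2 ltac:(lia)).
  pose proof (Nat.div_mod_eq t 2). pose proof (Nat.mod_upper_bound t 2 ltac:(lia)). lia.
Qed.

Lemma kz0 j : kz (4 * j) = Z.of_nat (S j).
Proof. unfold kz. destruct (dm4 j 0) as [A B]; [lia|]. rewrite Nat.add_0_r in A, B. rewrite A, B. reflexivity. Qed.
Lemma kz1 j : kz (4 * j + 1) = Z.of_nat (S j).
Proof. unfold kz. destruct (dm4 j 1) as [A B]; [lia|]. rewrite A, B. reflexivity. Qed.
Lemma kz2 j : kz (4 * j + 2) = (- Z.of_nat (S j))%Z.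
Proof. unfold kz. destruct (dm4 j 2) as [A B]; [lia|]. rewrite A, B. reflexivity. Qed.
Lemma kz3 j : kz (4 * j + 3) = (- Z.of_nat (S j))%Z.
Proof. unfold kz. destruct (dm4 j 3) as [A B]; [lia|]. rewrite A, B. reflexivity. Qed.
Lemma ph0 j : phf (4 * j) = 0.
Proof. unfold phf. pose proof (dm2 j 0 ltac:(lia)) as A. rewrite Nat.add_0_r in A. rewrite A. reflexivity. Qed.
Lemma ph1 j : phf (4 * j + 1) = PI / 2.
Proof. unfold phf. rewrite (dm2 j 1) by lia. reflexivity. Qed.
Lemma ph2 j : phf (4 * j + 2) = 0.
Proof. unfold phf. rewrite (dm2 j 2) by lia. reflexivity. Qed.
Lemma ph3 j : phf (4 * j + 3) = PI / 2.
Proof. unfold phf. rewrite (dm2 j 3) by lia. reflexivity. Qed.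

Lemma fre L (f1 f2 : R -> R) k : 0 < L -> (forall x, continuous f1 x) -> (forall x, continuous f2 x) ->
  Pc L f1 f2 (2 * PI * IZR k / L) 0 = sqrt L * fhat_re f1 f2 L k.
Proof.
  intros hL c1 c2. unfold fhat_re. rewrite Rint_RInt by (apply exR; intros; cont).
  assert (sqrt L <> 0) by (apply Rgt_not_eq, sqrt_lt_R0; auto).
  rewrite <- Rmult_assoc, Rinv_r, Rmult_1_l by auto.
  unfold Pc, ipf. apply RInt_extR. intros x.
  replace (2 * PI * IZR k / L * x + 0) with (2 * PI * IZR k * x / L) by (field; lra). ring.
Qed.

Lemma fim L (f1 f2 : R -> R) k : 0 < L -> (forall x, continuous f1 x) -> (forall x, continuous f2 x) ->
  Pc L f1 f2 (2 * PI * IZR k / L) (PI / 2) = sqrt L * fhat_im f1 f2 L k.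
Proof.
  intros hL c1 c2. unfold fhat_im. rewrite Rint_RInt by (apply exR; intros; cont).
  assert (sqrt L <> 0) by (apply Rgt_not_eq, sqrt_lt_R0; auto).
  rewrite <- Rmult_assoc, Rinv_r, Rmult_1_l by auto.
  unfold Pc, ipf. apply RInt_extR. intros x.
  replace (2 * PI * IZR k / L * x + PI / 2) with (2 * PI * IZR k * x / L + PI / 2) by (field; lra).
  rewrite cos_plus, sin_plus, cos_PI2, sin_PI2. ring.
Qed.

Lemma alg K n fr fi sL : 0 < sL -> 1 <= K ^ 2 ->
  (K - n) ^ 2 * (fr ^ 2 + fi ^ 2) * (4 * PI ^ 2 * (4 * PI ^ 2 / (sL * sL) ^ 3)) <=
  ((/ (sL * sL) * (2 * PI * n) * (2 * PI * K / (sL * sL)) - (2 * PI * K / (sL * sL)) ^ 2) * (sL * fr)) ^ 2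
  + ((/ (sL * sL) * (2 * PI * n) * (2 * PI * K / (sL * sL)) - (2 * PI * K / (sL * sL)) ^ 2) * (sL * fi)) ^ 2.
Proof.
  intros hs hK.
  match goal with |- ?a <= ?b => assert (E : b - a = 16 * PI ^ 4 / (sL * sL) ^ 3 * (K ^ 2 - 1) * ((K - n) ^ 2 * (fr ^ 2 + fi ^ 2))) end.
  { field. lra. }
  assert (0 <= 16 * PI ^ 4 / (sL * sL) ^ 3 * (K ^ 2 - 1) * ((K - n) ^ 2 * (fr ^ 2 + fi ^ 2))).
  { pose proof PI_RGT_0. apply Rmult_le_pos; [apply Rmult_le_pos|].
    - unfold Rdiv; apply Rmult_le_pos; [|apply Rlt_le, Rinv_0_lt_compat]; try apply pow_lt; nra.
    - lra.
    - apply Rmult_le_pos; [apply pow2_ge_0|]. apply Rplus_le_le_0_compat; apply pow2_ge_0. }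
  lra.
Qed.

Lemma lim_le u l B : Un_cv u l -> (forall n, u n <= B) -> l <= B.
Proof.
  intros H Hb. destruct (Rle_dec l B) as [r|r]; auto. exfalso.
  destruct (H (l - B)) as [N HN]; [lra|]. specialize (HN N (le_n _)). specialize (Hb N).
  unfold R_dist in HN. apply Rabs_def2 in HN. lra.
Qed.

Lemma Derive_D (D : nat -> R -> R) k x : smooth_derivs D -> Derive (D k) x = D (S k) x.
Proof. intros; apply is_derive_unique, isd; auto. Qed.

Lemma od (D1 D2 : nat -> R -> R) : smooth_derivs D1 -> smooth_derivs D2 ->
  (forall s, D1 1%nat s ^ 2 + D2 1%nat s ^ 2 = 1) ->
  forall x, D1 1%nat x * D1 2%nat x + D2 1%nat x * D2 2%nat x = 0.
Proof.
  intros hs1 hs2 harc x.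
  assert (H1 : is_derive (fun s => D1 1%nat s ^ 2 + D2 1%nat s ^ 2) x (2 * (D1 1%nat x * D1 2%nat x + D2 1%nat x * D2 2%nat x))).
  { auto_derive.
    - split; [eexists; apply isd; auto| split; [eexists; apply isd; auto | auto]].
    - rewrite !Derive_D by auto. ring. }
  assert (H3 : is_derive (fun _ : R => 1) x (2 * (D1 1%nat x * D1 2%nat x + D2 1%nat x * D2 2%nat x)))
    by (rewrite <- (functional_extensionality _ (fun _ => 1) harc); exact H1).
  clear H1; rename H3 into H1.
  assert (H2 : is_derive (fun _ : R => 1) x 0) by (apply (is_derive_const (K:=R_AbsRing) (V:=R_NormedModule))).
  apply is_derive_unique in H1. apply is_derive_unique in H2. toR. lra.
Qed.

Lemma ipfPc L h1 h2 om ph i : ipf L h1 h2 (E1 om ph i) (E2 om ph i) = Pc L h1 h2 (om i) (ph i).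
Proof. reflexivity. Qed.

Lemma Kge1 j : 1 <= IZR (Z.of_nat (S j)) ^ 2.
Proof. rewrite <- INR_IZR_INZ. rewrite S_INR. pose proof (pos_INR j). nra. Qed.
Lemma Kge1' j : 1 <= IZR (- Z.of_nat (S j)) ^ 2.
Proof. rewrite opp_IZR. replace ((- IZR (Z.of_nat (S j))) ^ 2) with (IZR (Z.of_nat (S j)) ^ 2) by ring. apply Kge1. Qed.

Theorem mainTheorem7 (L : R) (D1 D2 : nat -> R -> R)
  (hL : 0 < L)
  (hs1 : smooth_derivs D1) (hs2 : smooth_derivs D2)
  (hper1 : forall s, D1 0%nat (s + L) = D1 0%nat s)
  (hper2 : forall s, D2 0%nat (s + L) = D2 0%nat s)
  (harc : forall s, D1 1%nat s ^ 2 + D2 1%nat s ^ 2 = 1)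
  (hn : 1 <= rot_number D1 D2 L) :
  exists Itm1 : R,
    Un_cv (Itm1_partial (D1 0%nat) (D2 0%nat) L (rot_number D1 D2 L)) Itm1 /\
    4 * PI ^ 2 * Itm1 <= I0 D1 D2 L.
Proof.
  pose proof PI_RGT_0 as hPI.
  assert (c1 : forall j x, continuous (D1 j) x) by (intros; apply cD; auto).
  assert (c2 : forall j x, continuous (D2 j) x) by (intros; apply cD; auto).
  set (Ik := Rint (curvature D1 D2) 0 L).
  set (c := / L * Ik).
  set (n := rot_number D1 D2 L).
  assert (hc : c = / L * (2 * PI * n)) by (unfold c, n, rot_number; fold Ik; field; lra).
  assert (hh : ipf L (fun s => D1 2%nat s + c * D2 1%nat s) (fun s => D2 2%nat s - c * D1 1%nat s)
                     (fun s => D1 2%nat s + c * D2 1%nat s) (fun s => D2 2%nat s - c * D1 1%nat s)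
               = RInt (fun s => (curvature D1 D2 s - c) ^ 2) 0 L).
  { unfold ipf. apply RInt_extR. intros x.
    pose proof (od D1 D2 hs1 hs2 harc x) as O. pose proof (harc x) as A.
    match goal with |- ?l = ?r => assert (Hid : l - r = (D1 2%nat x ^ 2 + D2 2%nat x ^ 2) * (1 - (D1 1%nat x ^ 2 + D2 1%nat x ^ 2))
       + (D1 1%nat x * D1 2%nat x + D2 1%nat x * D2 2%nat x) ^ 2 + c ^ 2 * ((D1 1%nat x ^ 2 + D2 1%nat x ^ 2) - 1)) by (unfold curvature; ring) end.
    rewrite A, O in Hid. lra. }
  assert (I0eq : I0 D1 D2 L = L * RInt (fun s => (curvature D1 D2 s - c) ^ 2) 0 L).
  { unfold I0. cbv zeta. fold Ik. fold c. rewrite Rint_RInt; auto.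
    apply exR. intros x. unfold curvature. cont. }
  assert (bnd : forall N, 4 * PI ^ 2 * Itm1_partial (D1 0%nat) (D2 0%nat) L n N <= I0 D1 D2 L).
  { intros N.
    assert (ch1 : forall x, continuous (fun s => D1 2%nat s + c * D2 1%nat s) x) by (intros; cont).
    assert (ch2 : forall x, continuous (fun s => D2 2%nat s - c * D1 1%nat s) x) by (intros; cont).
    pose proof (bessel L _ _ (omf L) phf (4 * S N) hL ch1 ch2 (fun i j _ _ hij => orth L hL i j hij)) as HB.
    rewrite regroup in HB. rewrite I0eq, <- hh.
    eapply Rle_trans; [|exact HB].
    unfold Itm1_partial. rewrite <- Rmult_assoc, scal_sum. apply sum_Rle. intros j _.
    cbv beta zeta. rewrite !ipfPc. unfold omf.
    rewrite kz0, kz1, kz2, kz3, ph0, ph1, ph2, ph3.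
    assert (hw : forall k, 2 * PI * IZR k / L * L = 2 * IZR k * PI) by (intros; field; lra).
    rewrite !(Pc_h L D1 D2 c _ _ _ hs1 hs2 hper1 hper2 (hw _)).
    rewrite !fre, !fim by auto.
    unfold fhat_norm2.
    pose proof (alg _ n (fhat_re (D1 0%nat) (D2 0%nat) L (Z.of_nat (S j)))
       (fhat_im (D1 0%nat) (D2 0%nat) L (Z.of_nat (S j))) (sqrt L) (sqrt_lt_R0 L hL) (Kge1 j)) as A1.
    pose proof (alg _ n (fhat_re (D1 0%nat) (D2 0%nat) L (- Z.of_nat (S j)))
       (fhat_im (D1 0%nat) (D2 0%nat) L (- Z.of_nat (S j))) (sqrt L) (sqrt_lt_R0 L hL) (Kge1' j)) as A2.
    rewrite sqrt_sqrt in A1, A2 by lra.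
    rewrite hc. lra. }
  assert (grow : Un_growing (Itm1_partial (D1 0%nat) (D2 0%nat) L n)).
  { intros N. unfold Itm1_partial. rewrite tech5.
    match goal with |- ?C * ?S <= ?C * (?S + ?T) => assert (0 <= T); [|assert (0 < C)] end.
    - cbv beta zeta. unfold fhat_norm2.
      apply Rplus_le_le_0_compat; apply Rmult_le_pos; try apply pow2_ge_0;
        apply Rplus_le_le_0_compat; apply pow2_ge_0.
    - unfold Rdiv. apply Rmult_lt_0_compat; [nra|]. apply Rinv_0_lt_compat, pow_lt; auto.
    - apply Rmult_le_compat_l; lra. }
  assert (ub : has_ub (Itm1_partial (D1 0%nat) (D2 0%nat) L n)).
  { exists (I0 D1 D2 L / (4 * PI ^ 2)). intros x [i ->].
    specialize (bnd i). apply (Rmult_le_reg_l (4 * PI ^ 2)); [nra|].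
    replace (4 * PI ^ 2 * (I0 D1 D2 L / (4 * PI ^ 2))) with (I0 D1 D2 L) by (field; lra). auto. }
  destruct (growing_cv _ grow ub) as [l Hl].
  exists l. split; [exact Hl|].
  assert (l <= I0 D1 D2 L / (4 * PI ^ 2)).
  { apply (lim_le _ _ _ Hl). intros i. specialize (bnd i). apply (Rmult_le_reg_l (4 * PI ^ 2)); [nra|].
    replace (4 * PI ^ 2 * (I0 D1 D2 L / (4 * PI ^ 2))) with (I0 D1 D2 L) by (field; lra). auto. }
  apply (Rmult_le_compat_l (4 * PI ^ 2)) in H; [|nra].
  replace (4 * PI ^ 2 * (I0 D1 D2 L / (4 * PI ^ 2))) with (I0 D1 D2 L) in H by (field; lra). exact H.
Qed.
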